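(* Let $Q$ be a nonrecursive connected query, let $a$ be the maximum radius of a rule of $\Pi_Q$, and let $\mathbf T$ be the set of time points occurring in $\Pi_Q$. Let $\tau_a$ be a time point and let $\tau_0$ be the maximum of $\tau_a$ and the elements of $\mathbf T$. For every dataset $D'$, predicate $P$, tuple of objects $\vec o$ and time point $\tau\le\tau_0+a\cdot(\mathrm{rank}(\Pi_Q)-\mathrm{rank}(P))$: if $\Pi_Q\cup D'\models P(\vec o,\tau)$, then $\Pi_Q\cup D''\models P(\vec o,\tau)$, where $D''$ consists of the rigid facts of $D'$ and the temporal facts of $D'$ whose time argument $\tau'$ satisfies $\tau'\le\tau_0+\mathrm{rad}(\Pi_Q)$.
   Context: Temporal Datalog. Constants are partitioned into objects and integer time points; variables into object variables and time variables. A time term is a time point, a time variable, or an expression $t+k$ with $t$ a time variable and $k\in\mathbb{Z}$. Each predicate is either extensional (EDB) or intensional (IDB) and has an arity $n\ge0$, each position being of object sort or time sort; a predicate is rigid if all its positions are of object sort, and temporal if its last position is of time sort and all others are of object sort. An atom $P(t_1,\dots,t_n)$ has terms of the required sorts. A rule is $\bigwedge_i\alpha_i\to\alpha$ with $\alpha$ and all $\alpha_i$ rigid or temporal atoms, $\alpha$ IDB whenever the body is nonempty, and every head variable occurring in the body. A program is a finite set of rules. A fact is a ground rigid or temporal atom without $+$ (identified with the rule $\top\to\alpha$); a dataset is a finite set of EDB facts. Rules are read as universally quantified first-order sentences with $+$ interpreted as integer addition; $\Pi\models\alpha$ denotes entailment. A query is $Q=\langle P_Q,\Pi_Q\rangle$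 with $\Pi_Q$ a program and $P_Q$ an IDB predicate of $\Pi_Q$. Predicate $P$ depends on $P'$ in $\Pi$ if some rule of $\Pi$ has $P$ in the head and $P'$ in the body; $\Pi$ (or a query with program $\Pi$) is nonrecursive if the graph of this dependency relation is acyclic. $\mathrm{rank}(P)=\mathrm{rank}(P,\Pi_Q)$ is $0$ if $P$ does not occur in a rule head of $\Pi_Q$, and otherwise the maximum of $\mathrm{rank}(P')+1$ over predicates $P'$ on which $P$ depends; $\mathrm{rank}(\Pi_Q)$ is the maximum rank of a predicate of $\Pi_Q$. A rule is connected if it contains at most one time variable and, if a time variable occurs in the body, it also occurs in the head; a query is connected if all its rules are. For a time term $s$, $\Delta(s)=k$ if $s=t+k$ with $t$ a variable, and $\Delta(s)=0$ otherwise. The radius of a connected rule $r$ mentioning a time variable is the maximum of $|\Delta(s)-\Delta(s')|$ where $s$ is the time argument of the head and $s'$ the time argument of a body atom of $r$. The radius $\mathrm{rad}(\Pi)$ of a connected program is the number of rules of $\Pi$ times the maximum radius of a rule of $\Pi$. *)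

(* Defs.v *)
From Stdlib Require Import ZArith List Bool Relations.
Import ListNotations.
Set Implicit Arguments.

Definition obj := nat.
Definition ovar := nat.
Definition tvar := nat.

(** A predicate carries its signature: [parity] object positions, and
    (if [ptemporal]) one extra final time position; [pedb] = EDB flag.
    Only rigid/temporal predicates can occur in atoms, so no other
    sort patterns are needed. *)
Record predicate := Pred { pname : nat; parity : nat; ptemporal : bool; pedb : bool }.

Definition pred_eq_dec (p q : predicate) : {p = q} + {p <> q}.
Proof. repeat decide equality. Defined.

Inductive oterm := OConst (o : obj) | OVar (x : ovar).
Inductive tterm := TConst (z : Z) | TVar (t : tvar) | TPlus (t : tvar) (k : Z).

Record atom := Atom { apred : predicate; aobjs : list oterm; atime : option tterm }.

Definition wf_atom (a : atom) : Prop :=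
  length (aobjs a) = parity (apred a) /\
  match atime a with
  | None => ptemporal (apred a) = false
  | Some _ => ptemporal (apred a) = true
  end.

Definition ovars_atom (a : atom) : list ovar :=
  flat_map (fun t => match t with OVar x => [x] | OConst _ => [] end) (aobjs a).
Definition tvars_atom (a : atom) : list tvar :=
  match atime a with
  | Some (TVar t) | Some (TPlus t _) => [t]
  | _ => []
  end.

Record rule := Rule { body : list atom; head : atom }.

Definition wf_rule (r : rule) : Prop :=
  Forall wf_atom (head r :: body r) /\
  (body r <> [] -> pedb (apred (head r)) = false) /\
  incl (ovars_atom (head r)) (flat_map ovars_atom (body r)) /\
  incl (tvars_atom (head r)) (flat_map tvars_atom (body r)).

Definition program := list rule.

Definition wf_program (P : program) : Prop := Forall wf_rule P.

Definition is_fact (a : atom) : Prop :=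
  wf_atom a /\
  Forall (fun t => exists o, t = OConst o) (aobjs a) /\
  match atime a with None => True | Some (TConst _) => True | Some _ => False end.

Definition is_dataset (D : list atom) : Prop :=
  Forall (fun a => is_fact a /\ pedb (apred a) = true) D.

Definition fact_rule (a : atom) : rule := {| body := []; head := a |}.

Definition gatom := (predicate * list obj * option Z)%type.

Definition eval_o (s : ovar -> obj) (t : oterm) : obj :=
  match t with OConst o => o | OVar x => s x end.
Definition eval_t (th : tvar -> Z) (t : tterm) : Z :=
  match t with TConst z => z | TVar x => th x | TPlus x k => (th x + k)%Z end.

Definition ground (s : ovar -> obj) (th : tvar -> Z) (a : atom) : gatom :=
  (apred a, map (eval_o s) (aobjs a), option_map (eval_t th) (atime a)).

Definition sat_rule (I : gatom -> Prop) (r : rule) : Prop :=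
  forall s th, (forall b, In b (body r) -> I (ground s th b)) ->
               I (ground s th (head r)).

Definition entails (P : program) (g : gatom) : Prop :=
  forall I : gatom -> Prop, (forall r, In r P -> sat_rule I r) -> I g.

Definition depends (P : program) (p p' : predicate) : Prop :=
  exists r, In r P /\ apred (head r) = p /\ In p' (map apred (body r)).

Definition nonrecursive (P : program) : Prop :=
  forall p, ~ clos_trans predicate (depends P) p p.

Definition max_list (l : list nat) : nat := fold_left Nat.max l 0%nat.

Definition deps_list (P : program) (p : predicate) : list predicate :=
  flat_map (fun r => if pred_eq_dec (apred (head r)) p
                     then map apred (body r) else []) P.

Fixpoint rank_fuel (P : program) (n : nat) (p : predicate) : nat :=
  match n with
  | O => O
  | S n' => max_list (map (fun p' => S (rank_fuel P n' p')) (deps_list P p))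
  end.

(** rank(p, P); for nonrecursive P the longest dependency chain has
    length <= |P|, so fuel |P| computes the recursive definition exactly. *)
Definition rank (P : program) (p : predicate) : nat := rank_fuel P (length P) p.

Definition preds_of (P : program) : list predicate :=
  flat_map (fun r => map apred (head r :: body r)) P.

Definition rank_prog (P : program) : nat := max_list (map (rank P) (preds_of P)).

Definition rule_tvars (r : rule) : list tvar :=
  flat_map tvars_atom (head r :: body r).

Definition connected_rule (r : rule) : Prop :=
  (forall t1 t2, In t1 (rule_tvars r) -> In t2 (rule_tvars r) -> t1 = t2) /\
  incl (flat_map tvars_atom (body r)) (tvars_atom (head r)).

Definition connected_program (P : program) : Prop := Forall connected_rule P.

Definition delta (s : tterm) : Z := match s with TPlus _ k => k | _ => 0%Z end.

(** radius of a rule (0 for rules without time variables, where all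
    Delta's vanish anyway) *)
Definition rule_radius (r : rule) : nat :=
  match atime (head r) with
  | Some s => max_list (map (fun b => match atime b with
                                      | Some s' => Z.abs_nat (delta s - delta s')
                                      | None => O end) (body r))
  | None => O
  end.

Definition max_radius (P : program) : nat := max_list (map rule_radius P).

Definition rad (P : program) : nat := (length P * max_radius P)%nat.

Definition tpoints (P : program) : list Z :=
  flat_map (fun r => flat_map (fun a => match atime a with
                                        | Some (TConst z) => [z] | _ => [] end)
                              (head r :: body r)) P.

Definition tau0 (tau_a : Z) (P : program) : Z := fold_left Z.max (tpoints P) tau_a.

Record query := Query { qpred : predicate; qprog : program }.

Definition valid_query (Q : query) : Prop :=
  wf_program (qprog Q) /\ NoDup (qprog Q) /\
  pedb (qpred Q) = false /\ In (qpred Q) (preds_of (qprog Q)).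

Definition restrict_dataset (D : list atom) (bound : Z) : list atom :=
  filter (fun a => match atime a with
                   | None => true
                   | Some (TConst z) => Z.leb z bound
                   | Some _ => false end) D.

(* Main.v *)
Require Import Defs.
From Stdlib Require Import ZArith List Lia Relations.
Import ListNotations.

Lemma fold_max_ge_acc : forall l a, (a <= fold_left Nat.max l a)%nat.
Proof. induction l; simpl; intros; [lia|]. specialize (IHl (Nat.max a0 a)). lia. Qed.

Lemma fold_max_ge_in : forall l a x, In x l -> (x <= fold_left Nat.max l a)%nat.
Proof.
  induction l; simpl; intros a0 x H; [contradiction|]. destruct H as [H|H].
  - subst. pose proof (fold_max_ge_acc l (Nat.max a0 x)); lia.
  - apply IHl; auto.
Qed.

Lemma fold_max_le : forall l a m, (a <= m)%nat -> (forall x, In x l -> (x <= m)%nat) ->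
  (fold_left Nat.max l a <= m)%nat.
Proof.
  induction l; simpl; intros a0 m H1 H2; [lia|]. apply IHl.
  - pose proof (H2 a (or_introl eq_refl)). lia.
  - intros; apply H2; auto.
Qed.

Lemma fold_max_witness : forall l a m, (m <= fold_left Nat.max l a)%nat ->
  (m <= a)%nat \/ exists x, In x l /\ (m <= x)%nat.
Proof.
  induction l; simpl; intros a0 m H; [left; lia|].
  destruct (IHl _ _ H) as [H1|[x [Hx Hm]]].
  - destruct (Nat.max_spec a0 a) as [[_ E]|[_ E]]; rewrite E in H1.
    + right; exists a; auto.
    + left; auto.
  - right; exists x; auto.
Qed.

Lemma zfold_ge_acc : forall l a, (a <= fold_left Z.max l a)%Z.
Proof. induction l; simpl; intros; [lia|]. specialize (IHl (Z.max a0 a)). lia. Qed.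

Lemma zfold_ge_in : forall l a x, In x l -> (x <= fold_left Z.max l a)%Z.
Proof.
  induction l; simpl; intros a0 x H; [contradiction|]. destruct H as [H|H].
  - subst. pose proof (zfold_ge_acc l (Z.max a0 x)); lia.
  - apply IHl; auto.
Qed.

Inductive chain (P : program) : predicate -> list predicate -> Prop :=
| ch0 : forall p, chain P p []
| chS : forall p q l, depends P p q -> chain P q l -> chain P p (p :: l).

Lemma deps_in : forall P p q, depends P p q <-> In q (deps_list P p).
Proof.
  intros P p q; unfold depends, deps_list; rewrite in_flat_map; split.
  - intros [r [Hr [Hh Hb]]]. exists r; split; auto.
    destruct (pred_eq_dec (apred (Defs.head r)) p); [auto|congruence].
  - intros [r [Hr Hq]]. destruct (pred_eq_dec (apred (Defs.head r)) p); [|contradiction].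
    exists r; auto.
Qed.

Lemma rt_t : forall (R : relation predicate) x y z,
  clos_refl_trans _ R y z -> clos_trans _ R x y -> clos_trans _ R x z.
Proof.
  intros R x y z H; revert x; induction H; intros x0 Hx.
  - eapply t_trans; [exact Hx| apply t_step; auto].
  - auto.
  - auto.
Qed.

Lemma chain_rt : forall P q l x, chain P q l -> In x l -> clos_refl_trans _ (depends P) q x.
Proof.
  intros P q l x H; induction H; simpl; intros Hx; [contradiction|].
  destruct Hx as [Hx|Hx].
  - subst; apply rt_refl.
  - eapply rt_trans; [apply rt_step; eauto| auto].
Qed.

Lemma chain_nodup : forall P p l, nonrecursive P -> chain P p l -> NoDup l.
Proof.
  intros P p l HN H; induction H; constructor; auto.
  intros Hin. apply (HN p). eapply rt_t; [eapply chain_rt; eauto| apply t_step; auto].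
Qed.

Lemma chain_heads : forall P p l x, chain P p l -> In x l ->
  In x (map (fun r => apred (Defs.head r)) P).
Proof.
  intros P p l x H; induction H; simpl; intros Hx; [contradiction|].
  destruct Hx as [Hx|Hx]; auto. subst.
  destruct H as [r [Hr [Hh _]]]. apply in_map_iff; eauto.
Qed.

Lemma chain_len : forall P p l, nonrecursive P -> chain P p l -> (length l <= length P)%nat.
Proof.
  intros P p l HN H. rewrite <- (length_map (fun r => apred (Defs.head r)) P).
  apply NoDup_incl_length; [eapply chain_nodup; eauto|].
  intros x Hx; eapply chain_heads; eauto.
Qed.

Lemma A1 : forall P n p j, (j <= rank_fuel P n p)%nat -> exists l, chain P p l /\ length l = j.
Proof.
  intros P; induction n; intros p j H; simpl in H.
  - exists []; split; [constructor| simpl; lia].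
  - destruct j as [|j]. { exists []; split; [constructor|auto]. }
    unfold max_list in H. apply fold_max_witness in H as [H|[x [Hx Hm]]]; [lia|].
    apply in_map_iff in Hx as [p' [E Hp']]. subst x.
    destruct (IHn p' j) as [l [Hc Hl]]; [lia|].
    exists (p :: l); split; [econstructor; eauto; apply deps_in; auto| simpl; lia].
Qed.

Lemma A2 : forall P n p l, chain P p l -> (length l <= n)%nat -> (length l <= rank_fuel P n p)%nat.
Proof.
  intros P; induction n; intros p l Hc Hl; simpl; [lia|].
  inversion Hc; subst; simpl; [lia|].
  simpl in Hl. unfold max_list.
  eapply Nat.le_trans; [| apply fold_max_ge_in; apply in_map_iff; exists q; split;
    [reflexivity| apply deps_in; eauto]].
  pose proof (IHn q l0 H0 ltac:(lia)). lia.
Qed.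

Lemma rank_fuel_le : forall P n p, (rank_fuel P n p <= n)%nat.
Proof.
  intros P; induction n; intros p; simpl; [lia|]. apply fold_max_le; [lia|].
  intros x Hx; apply in_map_iff in Hx as [p' [E _]]; subst; specialize (IHn p'); lia.
Qed.

Lemma rank_dep : forall P r b, nonrecursive P -> In r P -> In b (body r) ->
  (S (rank P (apred b)) <= rank P (apred (Defs.head r)))%nat.
Proof.
  intros P r b HN Hr Hb. unfold rank.
  destruct (A1 P (length P) (apred b) (rank_fuel P (length P) (apred b)) (le_n _)) as [l [Hc Hl]].
  assert (Hc' : chain P (apred (Defs.head r)) (apred (Defs.head r) :: l)).
  { econstructor; eauto. exists r; split; auto; split; auto. apply in_map; auto. }
  pose proof (chain_len P _ _ HN Hc'). pose proof (A2 P (length P) _ _ Hc' H).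
  simpl in *; lia.
Qed.

Lemma rank_le_prog : forall P p, In p (preds_of P) -> (rank P p <= rank_prog P)%nat.
Proof. intros; unfold rank_prog, max_list; apply fold_max_ge_in, in_map; auto. Qed.

Lemma rank_prog_le : forall P, (rank_prog P <= length P)%nat.
Proof.
  intros; unfold rank_prog, max_list; apply fold_max_le; [lia|].
  intros x Hx; apply in_map_iff in Hx as [p [E _]]; subst; apply rank_fuel_le.
Qed.

Lemma body_preds : forall P r b, In r P -> In b (body r) -> In (apred b) (preds_of P).
Proof.
  intros; unfold preds_of; apply in_flat_map; exists r; split; auto.
  simpl; right; apply in_map; auto.
Qed.

Lemma tpoints_in : forall P r b z, In r P -> In b (body r) -> atime b = Some (TConst z) ->
  In z (tpoints P).
Proof.
  intros P r b z Hr Hb Ht; unfold tpoints; apply in_flat_map; exists r; split; auto.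
  apply in_flat_map; exists b; split; [simpl; auto|]. rewrite Ht; simpl; auto.
Qed.

Lemma radius_le : forall P r b sh sb, In r P -> In b (body r) ->
  atime (Defs.head r) = Some sh -> atime b = Some sb ->
  (Z.abs_nat (delta sh - delta sb) <= max_radius P)%nat.
Proof.
  intros P r b sh sb Hr Hb Hh Hbt.
  eapply Nat.le_trans; [| unfold max_radius, max_list; apply fold_max_ge_in, in_map; exact Hr].
  unfold rule_radius; rewrite Hh; unfold max_list; apply fold_max_ge_in.
  apply in_map_iff; exists b; rewrite Hbt; auto.
Qed.

Definition bnd (T0 : Z) (Pr : program) (g : gatom) : Prop :=
  match g with
  | (p, _, None) => True
  | (p, _, Some z) => (z <= T0 + Z.of_nat (max_radius Pr)
                 * (Z.of_nat (rank_prog Pr) - Z.of_nat (rank Pr p)))%Z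
  end.

Lemma body_bound : forall ta Pr r b s th,
  nonrecursive Pr -> connected_program Pr -> In r Pr -> In b (body r) ->
  bnd (tau0 ta Pr) Pr (ground s th (Defs.head r)) -> bnd (tau0 ta Pr) Pr (ground s th b).
Proof.
  intros ta Pr r b s th HN HC Hr Hb Hh.
  unfold bnd, ground in *; simpl in *.
  pose proof (rank_le_prog Pr (apred b) (body_preds Pr r b Hr Hb)) as Hrb.
  destruct (atime b) as [sb|] eqn:Eb; simpl; auto.
  destruct sb as [z|t|t k].
  { pose proof (zfold_ge_in (tpoints Pr) ta z (tpoints_in Pr r b z Hr Hb Eb)).
    unfold tau0. simpl. apply Nat2Z.inj_le in Hrb.
    pose proof (Nat2Z.is_nonneg (max_radius Pr)). nia. }
  all: assert (Ht : In t (tvars_atom (Defs.head r))) by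
   (unfold connected_program in HC; rewrite Forall_forall in HC; apply (proj2 (HC r Hr)); apply in_flat_map; exists b; split; auto;
    unfold tvars_atom; rewrite Eb; simpl; auto).
  all: pose proof (rank_dep Pr r b HN Hr Hb) as Hrd.
  all: unfold tvars_atom in Ht; destruct (atime (Defs.head r)) as [sh|] eqn:Eh; [|contradiction].
  all: pose proof (radius_le Pr r b sh _ Hr Hb Eh Eb) as Hrad.
  all: destruct sh as [z|t0|t0 k0]; simpl in Ht; try contradiction; destruct Ht as [Ht|[]]; subst t0; simpl in *.
  all: apply Nat2Z.inj_le in Hrad, Hrd; rewrite ?Nat2Z.inj_abs_nat in Hrad; rewrite Nat2Z.inj_succ in Hrd.
  all: apply Nat2Z.inj_le in Hrb; pose proof (Nat2Z.is_nonneg (max_radius Pr)); nia.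
Qed.

Theorem mainTheorem11 :
  forall (Q : query) (tau_a : Z),
    valid_query Q -> nonrecursive (qprog Q) -> connected_program (qprog Q) ->
    forall (D' : list atom) (P : predicate) (os : list obj) (tau : Z),
      is_dataset D' ->
      ptemporal P = true -> length os = parity P ->
      (tau <= tau0 tau_a (qprog Q)
               + Z.of_nat (max_radius (qprog Q))
                 * (Z.of_nat (rank_prog (qprog Q)) - Z.of_nat (rank (qprog Q) P)))%Z ->
      entails (qprog Q ++ map fact_rule D') (P, os, Some tau) ->
      entails (qprog Q ++ map fact_rule
                 (restrict_dataset D' (tau0 tau_a (qprog Q) + Z.of_nat (rad (qprog Q)))%Z))
              (P, os, Some tau).
Proof.
  intros Q ta HV HN HC D' P os tau HD _ _ Htau Hent I HI.
  assert (HJ : bnd (tau0 ta (qprog Q)) (qprog Q) (P, os, Some tau) -> I (P, os, Some tau)).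
  { apply (Hent (fun g => bnd (tau0 ta (qprog Q)) (qprog Q) g -> I g)).
    intros r Hr. apply in_app_or in Hr as [Hr|Hr].
    - intros s th Hb Hh. apply (HI r (in_or_app _ _ _ (or_introl Hr))).
      intros b Hbin. apply Hb; auto. eapply body_bound; eauto.
    - apply in_map_iff in Hr as [f [E Hf]]; subst r.
      intros s th _ Hh.
      assert (Hin : forall f, In f (restrict_dataset D' (tau0 ta (qprog Q) + Z.of_nat (rad (qprog Q)))%Z)
                 -> I (ground s th f)).
      { intros f0 Hf0. apply (HI (fact_rule f0)); [apply in_or_app; right; apply in_map; auto|].
        intros b []. }
      unfold is_dataset in HD; rewrite Forall_forall in HD.
      destruct (HD f Hf) as [[_ [_ Hfact]] _].
      cbn [Defs.head fact_rule] in Hh |- *. unfold bnd, ground in Hh.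
      unfold restrict_dataset in Hin.
      destruct (atime f) as [[z|t|t k]|] eqn:Ef; try contradiction.
      + destruct (Z.leb z (tau0 ta (qprog Q) + Z.of_nat (rad (qprog Q)))) eqn:Ez.
        * apply Hin. apply filter_In; split; auto. rewrite Ef; auto.
        * exfalso. apply Z.leb_gt in Ez. simpl in Hh.
          pose proof (rank_prog_le (qprog Q)). apply Nat2Z.inj_le in H.
          unfold rad in Ez. rewrite Nat2Z.inj_mul in Ez.
          pose proof (Nat2Z.is_nonneg (max_radius (qprog Q))).
          pose proof (Nat2Z.is_nonneg (rank (qprog Q) (apred f))). nia.
      + apply Hin. apply filter_In; split; auto. rewrite Ef; auto. }
  apply HJ. exact Htau.
Qed.
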